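(* Let the alphabet be countable and $\mu$ a probability on sentences. The following are equivalent: (1) $\mu$ is Gaifman; (2) $\mu(r=s)=\lim_{n\to\infty}\mu(\bigwedge_{i=1}^n((r\,t_i)=(s\,t_i)))$ for every pair $r,s$ of closed terms of the same function type $\alpha\to\beta$, where $t_1,t_2,\dots$ is an enumeration of all closed terms of type $\alpha$; (3) $\mu(r\neq s)=\lim_{n\to\infty}\mu(\bigvee_{i=1}^n((r\,t_i)\neq(s\,t_i)))$ for every such pair $r,s$ and enumeration; (4) $\mu(\exists x.\varphi)=\lim_{n\to\infty}\mu(\bigvee_{i=1}^n\varphi\{x/t_i\})$ for every formula $\varphi$ with a single free variable $x$, of type $\alpha$ say, where $t_1,t_2,\dots$ enumerates all closed terms of type $\alpha$; (5) $\mu(\forall x.\varphi)=\lim_{n\to\infty}\mu(\bigwedge_{i=1}^n\varphi\{x/t_i\})$ for every such $\varphi$ and enumeration. Moreover, in each case the enumeration $t_1,t_2,\dots$ may be replaced by one that contains a single representative from each equivalence class of closed terms of type $\alpha$ under the relation: $t$ and $t'$ are equivalent iff $t=t'$ is valid.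
   Context: Setting: higher-order logic (Church's simple theory of types, without a description operator), with Henkin semantics; an alphabet is countable if its set of constants is countable. Types are generated from $o$ and $\imath$ by $\alpha\to\beta$; terms are built by $\lambda$-abstraction and application; $\forall x.\varphi$ is $\lambda x.\varphi=\lambda x.\top$ and $\exists x.\varphi$ is $\lambda x.\varphi\neq\lambda x.\bot$. Formulas are terms of type $o$, sentences closed formulas; $\mathcal S$ is the set of sentences; $\varphi\{x/t\}$ denotes substitution. A sentence is valid if true in every interpretation. A probability on sentences is a non-negative $\mu:\mathcal S\to\mathbb R$ with $\mu(\varphi)=1$ for valid $\varphi$ and $\mu(\varphi\vee\psi)=\mu(\varphi)+\mu(\psi)$ whenever $\neg(\varphi\wedge\psi)$ is valid. $\mu$ is Gaifman if for every pair $r,s$ of closed terms of the same function type $\alpha\to\beta$, $\mu(r=s)=\inf_{\{t_1,\dots,t_n\}}\mu(\bigwedge_{i=1}^n((r\,t_i)=(s\,t_i)))$ over all finite sets of closed terms of type $\alpha$. *)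

(* Defs.v *)
From Stdlib Require Import Reals List.
Import ListNotations.
Open Scope R_scope.

(* Types of Church's simple theory of types: generated from o and iota *)
Inductive ty : Type := To | Ti | Tarr (a b : ty).

Record alphabet := { const : Type; ctype : const -> ty }.

Inductive var : list ty -> ty -> Type :=
| VZ (G : list ty) (a : ty) : var (a :: G) a
| VS (G : list ty) (a b : ty) : var G a -> var (b :: G) a.
Arguments VZ {G a}.
Arguments VS {G a b}.

Inductive tm (A : alphabet) : list ty -> ty -> Type :=
| tvar G a : var G a -> tm A G a
| tcon G (c : const A) : tm A G (ctype A c)
| tapp G a b : tm A G (Tarr a b) -> tm A G a -> tm A G b
| tlam G a b : tm A (a :: G) b -> tm A G (Tarr a b)
| teq G a : tm A G (Tarr a (Tarr a To))
| ttop G : tm A G To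
| tbot G : tm A G To
| tnot G : tm A G (Tarr To To)
| tand G : tm A G (Tarr To (Tarr To To))
| tor G : tm A G (Tarr To (Tarr To To)).
Arguments tvar {A G a}.
Arguments tcon {A G}.
Arguments tapp {A G a b}.
Arguments tlam {A G a b}.
Arguments teq {A G}.
Arguments ttop {A G}.
Arguments tbot {A G}.
Arguments tnot {A G}.
Arguments tand {A G}.
Arguments tor {A G}.

Definition closed (A : alphabet) (a : ty) := tm A [] a.
Definition sentence (A : alphabet) := tm A [] To.

Definition mkeq {A G a} (r s : tm A G a) : tm A G To := tapp (tapp (teq a) r) s.
Definition mkneg {A G} (p : tm A G To) : tm A G To := tapp tnot p.
Definition mkneq {A G a} (r s : tm A G a) : tm A G To := mkneg (mkeq r s).
Definition mkand {A G} (p q : tm A G To) : tm A G To := tapp (tapp tand p) q.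
Definition mkor {A G} (p q : tm A G To) : tm A G To := tapp (tapp tor p) q.
Definition mkforall {A G a} (phi : tm A (a :: G) To) : tm A G To :=
  mkeq (tlam phi) (tlam ttop).
Definition mkexists {A G a} (phi : tm A (a :: G) To) : tm A G To :=
  mkneq (tlam phi) (tlam tbot).

Fixpoint bigand {A G} (l : list (tm A G To)) : tm A G To :=
  match l with
  | [] => ttop
  | [p] => p
  | p :: l' => mkand p (bigand l')
  end.
Fixpoint bigor {A G} (l : list (tm A G To)) : tm A G To :=
  match l with
  | [] => tbot
  | [p] => p
  | p :: l' => mkor p (bigor l')
  end.

Definition lift_ren {G D : list ty} (b : ty) (r : forall a, var G a -> var D a)
  : forall a, var (b :: G) a -> var (b :: D) a :=
  fun a v =>
    match v in var L a' return
      (match L with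
       | [] => unit
       | b' :: G' => (forall c, var G' c -> var D c) -> var (b' :: D) a'
       end) with
    | VZ => fun _ => VZ
    | VS v' => fun r => VS (r _ v')
    end r.

Fixpoint rename {A} {G D : list ty} (r : forall a, var G a -> var D a)
  {a} (t : tm A G a) : tm A D a :=
  match t in tm _ G' a' return (forall c, var G' c -> var D c) -> tm A D a' with
  | tvar v => fun r => tvar (r _ v)
  | tcon c => fun _ => tcon c
  | tapp t u => fun r => tapp (rename r t) (rename r u)
  | tlam t => fun r => tlam (rename (lift_ren _ r) t)
  | teq a => fun _ => teq a
  | ttop => fun _ => ttop
  | tbot => fun _ => tbot
  | tnot => fun _ => tnot
  | tand => fun _ => tand
  | tor => fun _ => tor
  end r.

Definition lift_sub {A} {G D : list ty} (b : ty) (s : forall a, var G a -> tm A D a)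
  : forall a, var (b :: G) a -> tm A (b :: D) a :=
  fun a v =>
    match v in var L a' return
      (match L with
       | [] => unit
       | b' :: G' => (forall c, var G' c -> tm A D c) -> tm A (b' :: D) a'
       end) with
    | VZ => fun _ => tvar VZ
    | VS v' => fun s => rename (fun c w => VS w) (s _ v')
    end s.

Fixpoint subst {A} {G D : list ty} (s : forall a, var G a -> tm A D a)
  {a} (t : tm A G a) : tm A D a :=
  match t in tm _ G' a' return (forall c, var G' c -> tm A D c) -> tm A D a' with
  | tvar v => fun s => s _ v
  | tcon c => fun _ => tcon c
  | tapp t u => fun s => tapp (subst s t) (subst s u)
  | tlam t => fun s => tlam (subst (lift_sub _ s) t)
  | teq a => fun _ => teq a
  | ttop => fun _ => ttop
  | tbot => fun _ => tbot
  | tnot => fun _ => tnot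
  | tand => fun _ => tand
  | tor => fun _ => tor
  end s.

Definition sub_nil {A} {D : list ty} : forall a, var [] a -> tm A D a :=
  fun a v =>
    match v in var L a' return (match L with [] => tm A D a' | _ => unit end) with
    | VZ => tt
    | VS _ => tt
    end.

Definition sub_cons {A} {G D : list ty} {b : ty} (t : tm A D b)
  (s : forall a, var G a -> tm A D a) : forall a, var (b :: G) a -> tm A D a :=
  fun a v =>
    match v in var L a' return
      (match L with
       | [] => unit
       | b' :: G' => tm A D b' -> (forall c, var G' c -> tm A D c) -> tm A D a'
       end) with
    | VZ => fun t _ => t
    | VS v' => fun _ s => s _ v'
    end t s.

Definition subst1 {A a b} (phi : tm A [a] b) (t : closed A a) : closed A b :=
  subst (sub_cons t sub_nil) phi.

Definition econs {D : ty -> Type} {G : list ty} {b : ty} (x : D b)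
  (e : forall c, var G c -> D c) : forall c, var (b :: G) c -> D c :=
  fun a v =>
    match v in var L a' return
      (match L with
       | [] => unit
       | b' :: G' => D b' -> (forall c, var G' c -> D c) -> D a'
       end) with
    | VZ => fun x _ => x
    | VS v' => fun _ e => e _ v'
    end x e.

Definition enil {D : ty -> Type} : forall c, var [] c -> D c :=
  fun a v =>
    match v in var L a' return (match L with [] => D a' | _ => unit end) with
    | VZ => tt
    | VS _ => tt
    end.

(* Henkin semantics: an extensional applicative structure with
   D_o = {true,false}, nonempty domains, and a valuation function
   for all terms satisfying the usual clauses (Andrews' general models);
   the logical constants get their standard meaning. *)
Definition dom (Di : Type) (Df : ty -> ty -> Type) (t : ty) : Type :=
  match t with To => bool | Ti => Di | Tarr a b => Df a b end.

Record henkin (A : alphabet) := {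
  Di : Type;
  Df : ty -> ty -> Type;
  Di_inh : inhabited Di;
  Df_inh : forall a b, inhabited (Df a b);
  app : forall a b, Df a b -> dom Di Df a -> dom Di Df b;
  app_ext : forall a b (f g : Df a b), (forall x, app a b f x = app a b g x) -> f = g;
  cint : forall c : const A, dom Di Df (ctype A c);
  V : forall G a, tm A G a -> (forall c, var G c -> dom Di Df c) -> dom Di Df a;
  V_var : forall G a (v : var G a) e, V G a (tvar v) e = e a v;
  V_con : forall G c e, V G _ (tcon c) e = cint c;
  V_app : forall G a b (t : tm A G (Tarr a b)) (u : tm A G a) e,
      V G b (tapp t u) e = app a b (V G _ t e) (V G a u e);
  V_lam : forall G a b (t : tm A (a :: G) b) e x,
      app a b (V G _ (tlam t) e) x = V (a :: G) b t (econs (D := dom Di Df) x e);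
  V_eq : forall G a e (x y : dom Di Df a),
      app a To (app a (Tarr a To) (V G _ (teq a) e) x) y = true <-> x = y;
  V_top : forall G e, V G To ttop e = true;
  V_bot : forall G e, V G To tbot e = false;
  V_not : forall G e x, app To To (V G _ tnot e) x = negb x;
  V_and : forall G e x y,
      app To To (app To (Tarr To To) (V G _ tand e) x) y = andb x y;
  V_or : forall G e x y,
      app To To (app To (Tarr To To) (V G _ tor e) x) y = orb x y
}.
Arguments V {A} h {G a}.

Definition true_in {A} (M : henkin A) (phi : sentence A) : Prop :=
  V M phi (enil (D := dom (Di A M) (Df A M))) = true.
Definition valid {A} (phi : sentence A) : Prop := forall M : henkin A, true_in M phi.

Definition countable_alphabet (A : alphabet) : Prop :=
  exists f : const A -> nat, forall x y, f x = f y -> x = y.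

Definition probability {A} (mu : sentence A -> R) : Prop :=
  (forall phi, 0 <= mu phi) /\
  (forall phi, valid phi -> mu phi = 1) /\
  (forall phi psi, valid (mkneg (mkand phi psi)) -> mu (mkor phi psi) = mu phi + mu psi).

Definition is_glb (E : R -> Prop) (m : R) : Prop :=
  (forall x, E x -> m <= x) /\ (forall y, (forall x, E x -> y <= x) -> y <= m).

(* Gaifman: mu(r = s) = inf over finite sets {t1..tn} of closed terms of type a
   of mu(/\_i (r ti = s ti)); finite sets are given as lists. *)
Definition gaifman {A} (mu : sentence A -> R) : Prop :=
  forall (a b : ty) (r s : closed A (Tarr a b)),
    is_glb (fun x => exists l : list (closed A a),
                x = mu (bigand (map (fun t => mkeq (tapp r t) (tapp s t)) l)))
           (mu (mkeq r s)).

(* Enumerations t1, t2, ... of closed terms of type a.  An enumeration is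
   a sequence e : nat -> option (closed A a) (None = no entry, so that
   finite -- even empty -- enumerations are allowed). *)
Fixpoint somes {X} (l : list (option X)) : list X :=
  match l with
  | [] => []
  | Some x :: l' => x :: somes l'
  | None :: l' => somes l'
  end.

Definition first_n {X} (e : nat -> option X) (n : nat) : list X :=
  somes (map e (seq 0 n)).

Definition enumeration {A} (a : ty) (e : nat -> option (closed A a)) : Prop :=
  forall t : closed A a, exists n, e n = Some t.

Definition rep_enumeration {A} (a : ty) (e : nat -> option (closed A a)) : Prop :=
  (forall t : closed A a, exists n u, e n = Some u /\ valid (mkeq t u)) /\
  (forall n m u v, e n = Some u -> e m = Some v -> valid (mkeq u v) -> u = v).

Definition enum_kind {A} (rep : bool) (a : ty) (e : nat -> option (closed A a)) : Prop :=
  if rep then rep_enumeration a e else enumeration a e.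

Definition cond2 {A} (rep : bool) (mu : sentence A -> R) : Prop :=
  forall (a b : ty) (r s : closed A (Tarr a b)) (e : nat -> option (closed A a)),
    enum_kind rep a e ->
    Un_cv (fun n => mu (bigand (map (fun t => mkeq (tapp r t) (tapp s t)) (first_n e n))))
          (mu (mkeq r s)).

Definition cond3 {A} (rep : bool) (mu : sentence A -> R) : Prop :=
  forall (a b : ty) (r s : closed A (Tarr a b)) (e : nat -> option (closed A a)),
    enum_kind rep a e ->
    Un_cv (fun n => mu (bigor (map (fun t => mkneq (tapp r t) (tapp s t)) (first_n e n))))
          (mu (mkneq r s)).

Definition cond4 {A} (rep : bool) (mu : sentence A -> R) : Prop :=
  forall (a : ty) (phi : tm A [a] To) (e : nat -> option (closed A a)),
    enum_kind rep a e ->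
    Un_cv (fun n => mu (bigor (map (subst1 phi) (first_n e n))))
          (mu (mkexists phi)).

Definition cond5 {A} (rep : bool) (mu : sentence A -> R) : Prop :=
  forall (a : ty) (phi : tm A [a] To) (e : nat -> option (closed A a)),
    enum_kind rep a e ->
    Un_cv (fun n => mu (bigand (map (subst1 phi) (first_n e n))))
          (mu (mkforall phi)).

(* Main.v *)
Require Import Defs.
From Stdlib Require Import Reals List Lra Program.Equality FunctionalExtensionality Bool Cantor Eqdep_dec ClassicalEpsilon Classical Arith Wf_nat Lia.
Import ListNotations.
Open Scope R_scope.

Section Sem.
Variable A : alphabet.
Variable M : henkin A.
Notation D := (dom (Di A M) (Df A M)).

Lemma V_env_const G G' (e : forall c, var G c -> D c) (e' : forall c, var G' c -> D c) :
  (forall a, V M (teq a) e = V M (teq a) e') /\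
  V M ttop e = V M ttop e' /\ V M tbot e = V M tbot e' /\
  V M tnot e = V M tnot e' /\ V M Defs.tand e = V M Defs.tand e' /\ V M tor e = V M tor e'.
Proof.
  repeat split.
  - intro a. apply (app_ext A M). intro x. apply (app_ext A M). intro y.
    destruct (Defs.app A M a To (Defs.app A M a (Tarr a To) (V M (teq a) e) x) y) eqn:E1;
    destruct (Defs.app A M a To (Defs.app A M a (Tarr a To) (V M (teq a) e') x) y) eqn:E2; auto.
    + apply (V_eq A M) in E1. subst. rewrite <- E2. symmetry. apply (V_eq A M). reflexivity.
    + apply (V_eq A M) in E2. subst. rewrite <- E1. apply (V_eq A M). reflexivity.
  - rewrite !(V_top A M). auto.
  - rewrite !(V_bot A M). auto.
  - apply (app_ext A M). intro x. rewrite !(V_not A M). auto.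
  - apply (app_ext A M). intro x. apply (app_ext A M). intro y. rewrite !(V_and A M). auto.
  - apply (app_ext A M). intro x. apply (app_ext A M). intro y. rewrite !(V_or A M). auto.
Qed.

Lemma V_rename G D' (r : forall a, var G a -> var D' a) a (t : tm A G a)
  (e : forall c, var D' c -> D c) :
  V M (rename r t) e = V M t (fun c v => e c (r c v)).
Proof.
  revert D' r e. induction t; intros D' r e; simpl.
  - rewrite !(V_var A M). reflexivity.
  - rewrite !(V_con A M). reflexivity.
  - rewrite !(V_app A M), IHt1, IHt2. reflexivity.
  - apply (app_ext A M). intro x. rewrite !(V_lam A M), IHt. f_equal.
    apply functional_extensionality_dep. intro c.
    apply functional_extensionality. intro v. dependent destruction v; reflexivity.
  - apply V_env_const.
  - apply V_env_const.
  - apply V_env_const.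
  - apply V_env_const.
  - apply V_env_const.
  - apply V_env_const.
Qed.

Lemma V_subst G D' (s : forall a, var G a -> tm A D' a) a (t : tm A G a)
  (e : forall c, var D' c -> D c) :
  V M (subst s t) e = V M t (fun c v => V M (s c v) e).
Proof.
  revert D' s e. induction t; intros D' s e; simpl.
  - rewrite !(V_var A M). reflexivity.
  - rewrite !(V_con A M). reflexivity.
  - rewrite !(V_app A M), IHt1, IHt2. reflexivity.
  - apply (app_ext A M). intro x. rewrite !(V_lam A M), IHt. f_equal.
    apply functional_extensionality_dep. intro c.
    apply functional_extensionality. intro v. dependent destruction v; simpl.
    + rewrite (V_var A M). reflexivity.
    + rewrite V_rename. reflexivity.
  - apply V_env_const.
  - apply V_env_const.
  - apply V_env_const.
  - apply V_env_const.
  - apply V_env_const.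
  - apply V_env_const.
Qed.

Lemma env_nil (e : forall c, var [] c -> D c) : e = enil.
Proof.
  apply functional_extensionality_dep. intro c.
  apply functional_extensionality. intro v. dependent destruction v.
Qed.

Lemma V_subst1 a b (phi : tm A [a] b) (t : closed A a) :
  V M (subst1 phi t) enil = V M phi (econs (V M t enil) enil).
Proof.
  unfold subst1. rewrite V_subst. f_equal.
  apply functional_extensionality_dep. intro c.
  apply functional_extensionality. intro v. dependent destruction v; simpl; try reflexivity.
  dependent destruction v.
Qed.

Lemma V_wk a b (r : closed A b) (x : D a) :
  V M (rename (fun c w => VS w) r) (econs x enil) = V M r enil.
Proof.
  rewrite V_rename. reflexivity.
Qed.

End Sem.

Section Sem2.
Variable A : alphabet.
Variable M : henkin A.
Notation D := (dom (Di A M) (Df A M)).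

Lemma V_neg G (e : forall c, var G c -> D c) p : V M (mkneg p) e = negb (V M p e).
Proof. unfold mkneg. rewrite (V_app A M), (V_not A M). reflexivity. Qed.

Lemma V_and2 G (e : forall c, var G c -> D c) p q : V M (mkand p q) e = andb (V M p e) (V M q e).
Proof. unfold mkand. rewrite !(V_app A M), (V_and A M). reflexivity. Qed.

Lemma V_or2 G (e : forall c, var G c -> D c) p q : V M (mkor p q) e = orb (V M p e) (V M q e).
Proof. unfold mkor. rewrite !(V_app A M), (V_or A M). reflexivity. Qed.

Lemma V_eqt G (e : forall c, var G c -> D c) a (x y : tm A G a) :
  V M (mkeq x y) e = true <-> V M x e = V M y e.
Proof. unfold mkeq. rewrite !(V_app A M). apply (V_eq A M). Qed.

Lemma V_bigand G (e : forall c, var G c -> D c) l :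
  V M (bigand l) e = forallb (fun p : tm A G To => V M p e) l.
Proof.
  induction l as [|p l IH].
  - simpl. apply (V_top A M).
  - destruct l as [|q l].
    + simpl. rewrite andb_true_r. reflexivity.
    + change (V M (mkand p (bigand (q :: l))) e = (V M p e && forallb (fun p0 : tm A G To => V M p0 e) (q :: l))%bool).
      rewrite V_and2, IH. reflexivity.
Qed.

Lemma V_bigor G (e : forall c, var G c -> D c) l :
  V M (bigor l) e = existsb (fun p : tm A G To => V M p e) l.
Proof.
  induction l as [|p l IH].
  - simpl. apply (V_bot A M).
  - destruct l as [|q l].
    + simpl. rewrite orb_false_r. reflexivity.
    + change (V M (mkor p (bigor (q :: l))) e = (V M p e || existsb (fun p0 : tm A G To => V M p0 e) (q :: l))%bool).
      rewrite V_or2, IH. reflexivity.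
Qed.

End Sem2.

Definition sequiv {A} (p q : sentence A) := forall M : henkin A, V M p enil = V M q enil.

Section Prob.
Variable A : alphabet.
Variable mu : sentence A -> R.
Hypothesis Hp : probability mu.

Lemma mu_neg (p : sentence A) : mu (mkneg p) = 1 - mu p.
Proof.
  destruct Hp as [H0 [H1 H2]].
  assert (E : mu (mkor p (mkneg p)) = mu p + mu (mkneg p)).
  { apply H2. intro M. unfold true_in. rewrite V_neg, V_and2, V_neg.
    destruct (V M p enil); reflexivity. }
  rewrite H1 in E. lra.
  intro M. unfold true_in. rewrite V_or2, V_neg. destruct (V M p enil); reflexivity.
Qed.

Lemma mu_equiv (p q : sentence A) : sequiv p q -> mu p = mu q.
Proof.
  intro Hq. destruct Hp as [H0 [H1 H2]].
  assert (E : mu (mkor q (mkneg p)) = mu q + mu (mkneg p)).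
  { apply H2. intro M. unfold true_in. rewrite V_neg, V_and2, V_neg, Hq.
    destruct (V M q enil); reflexivity. }
  rewrite H1 in E. rewrite mu_neg in E. lra.
  intro M. unfold true_in. rewrite V_or2, V_neg, Hq. destruct (V M q enil); reflexivity.
Qed.

Lemma mu_mono (p q : sentence A) : (forall M : henkin A, V M p enil = true -> V M q enil = true) -> mu p <= mu q.
Proof.
  intro Hi. destruct Hp as [H0 [H1 H2]].
  assert (E : mu (mkor p (mkand q (mkneg p))) = mu p + mu (mkand q (mkneg p))).
  { apply H2. intro M. unfold true_in. rewrite V_neg, V_and2, V_and2, V_neg.
    destruct (V M p enil), (V M q enil); reflexivity. }
  assert (E2 : mu q = mu (mkor p (mkand q (mkneg p)))).
  { apply mu_equiv. intro M. rewrite V_or2, V_and2, V_neg.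
    specialize (Hi M). destruct (V M p enil), (V M q enil); auto. }
  specialize (H0 (mkand q (mkneg p))). lra.
Qed.

End Prob.

Lemma to_nat_inj p q : Cantor.to_nat p = Cantor.to_nat q -> p = q.
Proof. intro H. rewrite <- (Cantor.cancel_of_to p), <- (Cantor.cancel_of_to q), H. reflexivity. Qed.

Arguments Cantor.to_nat : simpl never.

Fixpoint tycode (t : ty) : nat :=
  match t with
  | To => Cantor.to_nat (0, 0)%nat
  | Ti => Cantor.to_nat (1, 0)%nat
  | Tarr a b => Cantor.to_nat (2, Cantor.to_nat (tycode a, tycode b))%nat
  end.

Lemma tycode_inj a b : tycode a = tycode b -> a = b.
Proof.
  revert b; induction a; destruct b; simpl; intro H; apply to_nat_inj in H;
    try discriminate H; auto.
  injection H as H. apply to_nat_inj in H. injection H as H1 H2.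
  f_equal; auto.
Qed.

Lemma ty_dec (a b : ty) : {a = b} + {a <> b}.
Proof. decide equality. Qed.

Fixpoint vcode {G a} (v : var G a) : nat :=
  match v with
  | VZ => 0%nat
  | VS v' => S (vcode v')
  end.

Lemma vcode_inj G a (v : var G a) a' (v' : var G a') :
  vcode v = vcode v' -> existT (var G) a v = existT (var G) a' v'.
Proof.
  induction v; intros; dependent destruction v'; simpl in *; try discriminate.
  - reflexivity.
  - injection H as H. apply IHv in H.
    assert (a = a0) by exact (f_equal (@projT1 _ _) H). subst.
    apply inj_pair2_eq_dec in H; [subst; reflexivity | apply ty_dec].
Qed.

Section Code.
Variable A : alphabet.
Variable f : const A -> nat.
Hypothesis finj : forall x y, f x = f y -> x = y.

Fixpoint code {G a} (t : tm A G a) : nat :=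
  match t with
  | tvar v => Cantor.to_nat (0, vcode v)
  | tcon c => Cantor.to_nat (1, f c)
  | tapp t u => Cantor.to_nat (2, Cantor.to_nat (code t, code u))
  | @tlam _ _ a b t => Cantor.to_nat (3, Cantor.to_nat (tycode a, code t))
  | teq a => Cantor.to_nat (4, tycode a)
  | ttop => Cantor.to_nat (5, 0)
  | tbot => Cantor.to_nat (6, 0)
  | tnot => Cantor.to_nat (7, 0)
  | Defs.tand => Cantor.to_nat (8, 0)
  | tor => Cantor.to_nat (9, 0)
  end%nat.

Lemma code_inj G a (t : tm A G a) a' (t' : tm A G a') :
  code t = code t' -> existT (tm A G) a t = existT (tm A G) a' t'.
Proof.
  revert a' t'.
  induction t; intros a' t' H; dependent destruction t'; simpl in H;
    apply to_nat_inj in H; try discriminate H; try reflexivity.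
  - injection H as H. apply vcode_inj in H.
    assert (a = a0) by exact (f_equal (@projT1 _ _) H). subst.
    apply inj_pair2_eq_dec in H; [subst; reflexivity | apply ty_dec].
  - injection H as H. apply finj in H. subst. reflexivity.
  - injection H as H. apply to_nat_inj in H. injection H as H1 H2.
    apply IHt1 in H1.
    assert (E : Tarr a b = Tarr a0 b0) by exact (f_equal (@projT1 _ _) H1).
    injection E as E1 E2. subst.
    apply inj_pair2_eq_dec in H1; [subst | apply ty_dec].
    apply IHt2 in H2. apply inj_pair2_eq_dec in H2; [subst; reflexivity | apply ty_dec].
  - injection H as H. apply to_nat_inj in H. injection H as H1 H2.
    apply tycode_inj in H1. subst.
    apply IHt in H2.
    assert (b = b0) by exact (f_equal (@projT1 _ _) H2). subst.
    apply inj_pair2_eq_dec in H2; [subst; reflexivity | apply ty_dec].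
  - injection H as H. apply tycode_inj in H. subst. reflexivity.
Qed.

Lemma code_inj' a (t t' : closed A a) : code t = code t' -> t = t'.
Proof.
  intro H. apply code_inj in H. apply inj_pair2_eq_dec in H; [exact H | apply ty_dec].
Qed.

End Code.

Lemma least_nat (P : nat -> Prop) : (exists n, P n) -> exists n, P n /\ forall m, P m -> (n <= m)%nat.
Proof.
  intros [n Hn]. apply NNPP. intro Hno.
  assert (forall k, ~ P k).
  { intro k. induction k as [k IH] using lt_wf_ind. intro Pk. apply Hno. exists k. split; auto.
    intros m Pm. destruct (le_lt_dec k m); auto. exfalso. exact (IH m l Pm). }
  exact (H n Hn).
Qed.

Lemma valid_eq_iff {A} a (t u : closed A a) :
  valid (mkeq t u) <-> forall M : henkin A, V M t enil = V M u enil.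
Proof.
  split; intros H M; specialize (H M); unfold true_in in *; apply V_eqt; auto.
Qed.

Lemma valid_eq_1 {A} a (t u : closed A a) :
  valid (mkeq t u) -> forall M : henkin A, V M t enil = V M u enil.
Proof. apply valid_eq_iff. Qed.
Lemma valid_eq_2 {A} a (t u : closed A a) :
  (forall M : henkin A, V M t enil = V M u enil) -> valid (mkeq t u).
Proof. apply valid_eq_iff. Qed.

Lemma exists_enum {A} (HA : countable_alphabet A) (rep : bool) (a : ty) :
  exists e : nat -> option (closed A a), enum_kind rep a e.
Proof.
  destruct HA as [f finj].
  destruct rep; simpl.
  - set (P := fun (n : nat) (t : closed A a) => code A f t = n /\
          forall t', valid (mkeq t t') -> (code A f t <= code A f t')%nat).
    exists (fun n => match excluded_middle_informative (exists t, P n t) with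
              | left H => Some (proj1_sig (constructive_indefinite_description _ H))
              | right _ => None end).
    split.
    + intro t.
      destruct (least_nat (fun k => exists t', valid (mkeq t t') /\ code A f t' = k))
        as [k [[t0 [Ht0 Hk]] Hmin]].
      { exists (code A f t), t. split; auto. apply valid_eq_2. auto. }
      assert (HP : P k t0).
      { split; auto. intros t' Ht'. rewrite Hk. apply Hmin. exists t'. split; auto.
        apply valid_eq_2. pose proof (valid_eq_1 _ _ _ Ht0) as E0. pose proof (valid_eq_1 _ _ _ Ht') as E1.
        intro M. rewrite E0, E1. reflexivity. }
      exists k.
      destruct (excluded_middle_informative (exists t1, P k t1)) as [H|H];
        [|exfalso; apply H; eauto].
      destruct (constructive_indefinite_description _ H) as [u [Hu1 Hu2]]; simpl.
      exists u. split; auto.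
      assert (u = t0) by (apply (code_inj' A f finj); congruence). subst. exact Ht0.
    + intros n m u v Hn Hm Huv.
      destruct (excluded_middle_informative (exists t1, P n t1)) as [H|H]; [|discriminate].
      destruct (constructive_indefinite_description _ H) as [u' [Hu1 Hu2]]; simpl in Hn.
      injection Hn as Hn. subst u'.
      destruct (excluded_middle_informative (exists t1, P m t1)) as [H'|H']; [|discriminate].
      destruct (constructive_indefinite_description _ H') as [v' [Hv1 Hv2]]; simpl in Hm.
      injection Hm as Hm. subst v'.
      apply (code_inj' A f finj).
      apply Nat.le_antisymm; [apply Hu2; auto | apply Hv2].
      apply valid_eq_2. pose proof (valid_eq_1 _ _ _ Huv) as E. intro M. rewrite E. reflexivity.
  - exists (fun n => match excluded_middle_informative (exists t : closed A a, code A f t = n) with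
              | left H => Some (proj1_sig (constructive_indefinite_description _ H))
              | right _ => None end).
    intro t. exists (code A f t).
    destruct (excluded_middle_informative (exists t1 : closed A a, code A f t1 = code A f t)) as [H|H];
      [|exfalso; eauto].
    destruct (constructive_indefinite_description _ H) as [u Hu]; simpl.
    f_equal. apply (code_inj' A f finj). exact Hu.
Qed.

Lemma bool_iff (b1 b2 : bool) : (b1 = true <-> b2 = true) -> b1 = b2.
Proof. destruct b1, b2; intuition congruence. Qed.

Lemma Un_cv_eq (x y : nat -> R) L L' : (forall n, x n = y n) -> L = L' -> Un_cv x L -> Un_cv y L'.
Proof.
  intros H HL Hc eps Heps. destruct (Hc eps Heps) as [N HN]. exists N. intros n Hn.
  rewrite <- H, <- HL. auto.
Qed.

Lemma Un_cv_1m (x : nat -> R) L : Un_cv x L -> Un_cv (fun n => 1 - x n) (1 - L).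
Proof.
  intros Hc eps Heps. destruct (Hc eps Heps) as [N HN]. exists N. intros n Hn.
  unfold R_dist in *. replace (1 - x n - (1 - L)) with (-(x n - L)) by ring.
  rewrite Rabs_Ropp. auto.
Qed.

Lemma somes_In {X} (l : list (option X)) t : In t (somes l) <-> In (Some t) l.
Proof.
  induction l as [|[y|] l IH]; simpl.
  - tauto.
  - rewrite IH. split; intros [H|H]; auto; left; congruence.
  - rewrite IH. split; auto. intros [H|H]; auto; discriminate.
Qed.

Lemma first_n_In {X} (e : nat -> option X) n t :
  In t (first_n e n) <-> exists k, (k < n)%nat /\ e k = Some t.
Proof.
  unfold first_n. rewrite somes_In, in_map_iff. split.
  - intros [k [Hk Hin]]. apply in_seq in Hin. exists k. split; [lia|auto].
  - intros [k [Hk Hin]]. exists k. split; auto. apply in_seq. lia.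
Qed.

Section Main.
Variable A : alphabet.
Variable mu : sentence A -> R.
Hypothesis Hp : probability mu.
Hypothesis HA : countable_alphabet A.

Definition eqs {a b} (r s : closed A (Tarr a b)) (l : list (closed A a)) : sentence A :=
  bigand (map (fun t => mkeq (tapp r t) (tapp s t)) l).

Lemma kind_cover rep a (e : nat -> option (closed A a)) : enum_kind rep a e ->
  forall t, exists k u, e k = Some u /\ forall M : henkin A, V M t enil = V M u enil.
Proof.
  destruct rep; simpl; intros He t.
  - destruct He as [He _]. destruct (He t) as [k [u [H1 H2]]]. exists k, u. split; auto.
    apply valid_eq_1. auto.
  - destruct (He t) as [k Hk]. exists k, t. auto.
Qed.

Lemma list_cover rep a (e : nat -> option (closed A a)) : enum_kind rep a e ->
  forall l, exists N, forall n, (N <= n)%nat -> forall t, In t l ->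
    exists u, In u (first_n e n) /\ forall M : henkin A, V M t enil = V M u enil.
Proof.
  intros He l. induction l as [|t l IH].
  - exists 0%nat. intros n _ t [].
  - destruct IH as [N HN]. destruct (kind_cover rep a e He t) as [k [u [Hk Hu]]].
    exists (Nat.max N (S k)). intros n Hn t' [Ht'|Ht'].
    + subst t'. exists u. split; auto. apply first_n_In. exists k. split; auto. lia.
    + apply HN; auto. lia.
Qed.

Lemma low a b (r s : closed A (Tarr a b)) l : mu (mkeq r s) <= mu (eqs r s l).
Proof.
  apply (mu_mono A mu Hp). intros M H. unfold eqs. rewrite V_bigand.
  apply forallb_forall. intros p Hin. apply in_map_iff in Hin. destruct Hin as [t [Ht _]]. subst p.
  apply V_eqt. rewrite !(V_app A M). apply V_eqt in H. rewrite H. reflexivity.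
Qed.

Lemma cover_le a b (r s : closed A (Tarr a b)) l l' :
  (forall t, In t l -> exists u, In u l' /\ forall M : henkin A, V M t enil = V M u enil) ->
  mu (eqs r s l') <= mu (eqs r s l).
Proof.
  intro Hc. apply (mu_mono A mu Hp). intros M H. unfold eqs in *. rewrite V_bigand in *.
  rewrite forallb_forall in *. intros p Hin. apply in_map_iff in Hin. destruct Hin as [t [Ht Hin]]. subst p.
  destruct (Hc t Hin) as [u [Hu HMu]].
  assert (Hx : V M (mkeq (tapp r u) (tapp s u)) enil = true).
  { apply H. apply in_map_iff. exists u. auto. }
  apply V_eqt. apply V_eqt in Hx. rewrite !(V_app A M) in *. rewrite HMu. exact Hx.
Qed.

Lemma g_iff_2 rep : gaifman mu <-> cond2 rep mu.
Proof.
  split.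
  - intros Hg a b r s e He eps Heps.
    destruct (Hg a b r s) as [Hlow Hgr].
    assert (Hl : exists l, mu (eqs r s l) < mu (mkeq r s) + eps).
    { apply Classical_Prop.NNPP. intro Hn.
      assert (mu (mkeq r s) + eps <= mu (mkeq r s)); [|lra].
      apply Hgr. intros x [l Hx]. subst x. apply Rnot_lt_le. intro Hlt. apply Hn. exists l. exact Hlt. }
    destruct Hl as [l Hl].
    destruct (list_cover rep a e He l) as [N HN]. exists N. intros n Hn.
    pose proof (cover_le a b r s l (first_n e n) (HN n ltac:(lia))).
    pose proof (low a b r s (first_n e n)).
    unfold eqs in *. unfold R_dist. rewrite Rabs_right; lra.
  - intros H2 a b r s. split.
    + intros x [l Hx]. subst x. apply low.
    + intros y Hy. destruct (exists_enum HA rep a) as [e He].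
      pose proof (H2 a b r s e He) as Hc.
      apply Rnot_lt_le. intro Hlt.
      destruct (Hc (y - mu (mkeq r s))) as [N HN]; [lra|].
      specialize (HN N (le_n N)). unfold R_dist in HN.
      assert (y <= mu (bigand (map (fun t => mkeq (tapp r t) (tapp s t)) (first_n e N)))).
      { apply Hy. eauto. }
      apply Rabs_def2 in HN. lra.
Qed.

Lemma existsb_neg {X} (h k : sentence A -> bool) (F G : X -> sentence A) l :
  (forall x, h (F x) = negb (k (G x))) ->
  existsb h (map F l) = negb (forallb k (map G l)).
Proof.
  intro H. induction l; simpl; auto. rewrite IHl, H. destruct (k (G a)); reflexivity.
Qed.

Lemma forallb_ext {X} (h k : sentence A -> bool) (F G : X -> sentence A) l :
  (forall x, h (F x) = k (G x)) -> forallb h (map F l) = forallb k (map G l).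
Proof. intro H. induction l; simpl; auto. rewrite IHl, H. reflexivity. Qed.

Lemma existsb_ext {X} (h k : sentence A -> bool) (F G : X -> sentence A) l :
  (forall x, h (F x) = k (G x)) -> existsb h (map F l) = existsb k (map G l).
Proof. intro H. induction l; simpl; auto. rewrite IHl, H. reflexivity. Qed.

Lemma c2_iff_3 rep : cond2 rep mu <-> cond3 rep mu.
Proof.
  assert (Hs : forall a b (r s : closed A (Tarr a b)) l,
    mu (bigor (map (fun t => mkneq (tapp r t) (tapp s t)) l)) =
    1 - mu (bigand (map (fun t => mkeq (tapp r t) (tapp s t)) l))).
  { intros. rewrite <- (mu_neg A mu Hp). apply (mu_equiv A mu Hp). intro M.
    rewrite V_neg, V_bigor, V_bigand. apply existsb_neg. intro x. unfold mkneq. apply V_neg. }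
  split.
  - intros H a b r s e He. unfold mkneq. rewrite (mu_neg A mu Hp).
    eapply Un_cv_eq; [| reflexivity | apply Un_cv_1m; apply (H a b r s e He)].
    intro n. cbv beta. unfold mkneq in Hs. rewrite Hs. reflexivity.
  - intros H a b r s e He.
    eapply Un_cv_eq; [| | apply Un_cv_1m; apply (H a b r s e He)].
    + intro n. cbv beta. rewrite Hs. ring.
    + unfold mkneq. rewrite (mu_neg A mu Hp). ring.
Qed.

Lemma pt_lam a (phi : tm A [a] To) (t : closed A a) (M : henkin A) (c : tm A [a] To) :
  V M (tapp (tlam phi) t) enil = V M (subst1 phi t) enil /\
  V M (tapp (tlam c) t) enil = V M c (econs (V M t enil) enil).
Proof.
  rewrite !(V_app A M), !(V_lam A M), V_subst1. auto.
Qed.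

Definition wk {a b} (r : closed A b) : tm A [a] b :=
  rename (fun c (w : var [] c) => @VS [] c a w) r.

Definition phiE {a b} (r s : closed A (Tarr a b)) : tm A [a] To :=
  mkeq (tapp (wk r) (tvar VZ)) (tapp (wk s) (tvar VZ)).

Lemma phiE_val a b (r s : closed A (Tarr a b)) (M : henkin A) x :
  V M (phiE r s) (econs x enil) = true <->
  Defs.app A M a b (V M r enil) x = Defs.app A M a b (V M s enil) x.
Proof.
  unfold phiE. rewrite V_eqt. rewrite !(V_app A M). unfold wk. rewrite !V_wk, (V_var A M).
  simpl. tauto.
Qed.

Lemma fun_eq_iff a b (M : henkin A) (f g : dom (Di A M) (Df A M) (Tarr a b)) :
  f = g <-> forall x, Defs.app A M a b f x = Defs.app A M a b g x.
Proof. split. intros; subst; auto. apply (app_ext A M). Qed.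

Lemma c2_iff_5 rep : cond2 rep mu <-> cond5 rep mu.
Proof.
  split.
  - intros H a phi e He.
    eapply Un_cv_eq; [| reflexivity | apply (H a To (tlam phi) (tlam ttop) e He)].
    intro n. apply (mu_equiv A mu Hp). intro M. rewrite !V_bigand. apply forallb_ext.
    intro t. apply bool_iff. rewrite V_eqt. destruct (pt_lam a phi t M ttop) as [E1 E2].
    rewrite E1, E2, (V_top A M). tauto.
  - intros H a b r s e He.
    eapply Un_cv_eq; [| | apply (H a (phiE r s) e He)].
    + intro n. apply (mu_equiv A mu Hp). intro M. rewrite !V_bigand. apply forallb_ext.
      intro t. apply bool_iff. rewrite V_subst1, phiE_val, V_eqt, !(V_app A M). tauto.
    + apply (mu_equiv A mu Hp). intro M. apply bool_iff. unfold mkforall.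
      rewrite !V_eqt, !fun_eq_iff. split; intros Hx x; specialize (Hx x).
      * rewrite !(V_lam A M), (V_top A M) in Hx. apply phiE_val. exact Hx.
      * rewrite !(V_lam A M), (V_top A M). apply phiE_val. exact Hx.
Qed.

Lemma c3_iff_4 rep : cond3 rep mu <-> cond4 rep mu.
Proof.
  split.
  - intros H a phi e He.
    eapply Un_cv_eq; [| reflexivity | apply (H a To (tlam phi) (tlam tbot) e He)].
    intro n. apply (mu_equiv A mu Hp). intro M. rewrite !V_bigor. apply existsb_ext.
    intro t. unfold mkneq. rewrite V_neg. apply bool_iff.
    destruct (pt_lam a phi t M tbot) as [E1 E2].
    destruct (V M (subst1 phi t) enil) eqn:Eb.
    + split; auto. intros _. apply negb_true_iff. destruct (V M (mkeq _ _) enil) eqn:Ee; auto.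
      apply V_eqt in Ee. rewrite E1, E2, (V_bot A M) in Ee. discriminate.
    + split; [|discriminate]. intro Hn. apply negb_true_iff in Hn.
      exfalso. assert (Ht : V M (mkeq (tapp (tlam phi) t) (tapp (tlam tbot) t)) enil = true).
      { apply V_eqt. rewrite E1, E2, (V_bot A M). reflexivity. }
      congruence.
  - intros H a b r s e He.
    eapply Un_cv_eq; [| | apply (H a (mkneg (phiE r s)) e He)].
    + intro n. apply (mu_equiv A mu Hp). intro M. rewrite !V_bigor. apply existsb_ext.
      intro t. rewrite V_subst1. unfold mkneq. rewrite !V_neg. f_equal. apply bool_iff.
      rewrite phiE_val, V_eqt, !(V_app A M). tauto.
    + apply (mu_equiv A mu Hp). intro M. unfold mkexists, mkneq. rewrite !V_neg. f_equal.
      apply bool_iff. rewrite !V_eqt, !fun_eq_iff. split; intros Hx x; specialize (Hx x);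
        rewrite ?(V_lam A M), ?(V_bot A M), ?V_neg in *.
      * apply phiE_val. destruct (V M (phiE r s) (econs x enil)); auto.
      * apply phiE_val in Hx. rewrite Hx. reflexivity.
Qed.

End Main.

Theorem mainTheorem7 (A : alphabet) (mu : sentence A -> R) :
  countable_alphabet A -> probability mu ->
  forall rep : bool,
    (gaifman mu <-> cond2 rep mu) /\
    (gaifman mu <-> cond3 rep mu) /\
    (gaifman mu <-> cond4 rep mu) /\
    (gaifman mu <-> cond5 rep mu).
Proof.
  intros HA Hp rep.
  pose proof (g_iff_2 A mu Hp HA rep).
  pose proof (c2_iff_3 A mu Hp rep).
  pose proof (c2_iff_5 A mu Hp rep).
  pose proof (c3_iff_4 A mu Hp rep).
  tauto.
Qed.
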